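(* Let $g(x)=\sum_{n\ge 1}\frac{2\,(4n+1)!}{(n+1)!\,(3n+2)!}\,x^n$, regarded as a formal power series. Then $$\lim_{n\to\infty}\frac{[x^n]\,(g(x))^2}{[x^n]\,g(x)}=\frac{10}{27}.$$
   Context: For a formal power series $f(x)$, $[x^n]f(x)$ denotes the coefficient of $x^n$ in $f(x)$. *)

(* Defs.v *)
From Stdlib Require Import Reals Arith.
Open Scope R_scope.

Definition fps := nat -> R.

Definition fps_mul (a b : fps) : fps :=
  fun n => sum_f_R0 (fun k => a k * b (n - k)%nat) n.

Definition g : fps :=
  fun n => match n with
           | O => 0
           | _ => 2 * INR (fact (4 * n + 1))
                  / (INR (fact (n + 1)) * INR (fact (3 * n + 2)))
           end.

(* Main.v *)
Require Import Defs.
From Stdlib Require Import Reals.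
From Stdlib Require Import Arith Lra Lia.
From Coquelicot Require Import Coquelicot.
Open Scope R_scope.

Definition u (r n : nat) : R :=
  match n with
  | O => 1
  | S m => INR r * INR (fact (4*m+r+3)) / (INR (fact (S m)) * INR (fact (3*m+r+3)))
  end.

Lemma factS (k : nat) : INR (fact (S k)) = (INR k + 1) * INR (fact k).
Proof. rewrite fact_simpl, mult_INR, S_INR. reflexivity. Qed.

Lemma fact_nz (k : nat) : INR (fact k) <> 0.
Proof. apply not_0_INR, fact_neq_0. Qed.

Lemma u_rec (r m : nat) : u (S r) (S m) = u r (S m) + u (r+4) m.
Proof.
  destruct m as [|p].
  - unfold u.
    replace (4*0 + S r + 3)%nat with (S (r + 3))%nat by lia.
    replace (3*0 + S r + 3)%nat with (S (r + 3))%nat by lia.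
    replace (4*0 + r + 3)%nat with (r + 3)%nat by lia.
    replace (3*0 + r + 3)%nat with (r + 3)%nat by lia.
    pose proof (fact_nz (S (r + 3))). pose proof (fact_nz (r + 3)).
    rewrite (S_INR r). replace (INR (fact 1)) with 1 by reflexivity.
    field. split; auto.
  - unfold u.
    replace (4 * S p + S r + 3)%nat with (S (4*p+r+7))%nat by lia.
    replace (3 * S p + S r + 3)%nat with (S (3*p+r+6))%nat by lia.
    replace (4 * S p + r + 3)%nat with (4*p+r+7)%nat by lia.
    replace (3 * S p + r + 3)%nat with (3*p+r+6)%nat by lia.
    replace (4 * p + (r+4) + 3)%nat with (4*p+r+7)%nat by lia.
    replace (3 * p + (r+4) + 3)%nat with (S (3*p+r+6))%nat by lia.
    rewrite !factS.
    pose proof (fact_nz (4*p+r+7)). pose proof (fact_nz (3*p+r+6)). pose proof (fact_nz p).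
    set (A := INR (fact (4*p+r+7))) in *. set (B := INR (fact (3*p+r+6))) in *.
    set (C := INR (fact p)) in *.
    repeat rewrite S_INR || rewrite plus_INR || rewrite mult_INR. simpl INR.
    pose proof (pos_INR p). pose proof (pos_INR r).
    field. repeat split; lra.
Qed.

Lemma u0S (m : nat) : u 0 (S m) = 0.
Proof. unfold u. change (INR 0) with 0. unfold Rdiv. ring. Qed.

Lemma conv_u (n : nat) : forall a b : nat,
  sum_f_R0 (fun k => u a k * u b (n - k)) n = u (a + b) n.
Proof.
  induction n as [|n IHn]; intros a b.
  - simpl. ring.
  - induction a as [|a IHa].
    + rewrite decomp_sum by lia. simpl Init.Nat.pred.
      rewrite sum_eq_R0.
      * simpl. ring.
      * intros i _. rewrite u0S. ring.
    + rewrite decomp_sum by lia. simpl Init.Nat.pred.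
      rewrite (sum_eq _ (fun i => u a (S i) * u b (n - i) + u (a+4) i * u b (n - i))).
      2:{ intros i _. rewrite Nat.sub_succ, u_rec. ring. }
      rewrite sum_plus, IHn.
      replace (u (S a) 0 * u b (S n - 0)) with (u a 0 * u b (S n - 0)) by reflexivity.
      assert (E : u a 0 * u b (S n - 0) + sum_f_R0 (fun i => u a (S i) * u b (n - i)) n
                  = sum_f_R0 (fun k => u a k * u b (S n - k)) (S n)).
      { rewrite (decomp_sum _ (S n)) by lia. reflexivity. }
      rewrite <- Rplus_assoc, E, IHa.
      replace (S a + b)%nat with (S (a + b)) by lia.
      rewrite u_rec. replace (a + 4 + b)%nat with (a + b + 4)%nat by lia. reflexivity.
Qed.

Lemma g_eq (k : nat) : g k = 2 * u 2 k - u 3 k - u 0 k.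
Proof.
  destruct k as [|m].
  - unfold g, u. ring.
  - rewrite u0S. unfold g, u.
    replace (4 * S m + 1)%nat with (4*m+2+3)%nat by lia.
    replace (3 * S m + 2)%nat with (3*m+2+3)%nat by lia.
    replace (S m + 1)%nat with (S (S m)) by lia.
    replace (4*m+3+3)%nat with (S (4*m+2+3)) by lia.
    replace (3*m+3+3)%nat with (S (3*m+2+3)) by lia.
    rewrite !factS.
    pose proof (fact_nz (4*m+2+3)). pose proof (fact_nz (3*m+2+3)). pose proof (fact_nz m).
    set (A := INR (fact (4*m+2+3))) in *. set (B := INR (fact (3*m+2+3))) in *.
    set (C := INR (fact m)) in *.
    repeat rewrite S_INR || rewrite plus_INR || rewrite mult_INR. simpl INR.
    pose proof (pos_INR m).
    field. repeat split; lra.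
Qed.

Lemma sum_lin (c : R) (f h : nat -> R) (N : nat) :
  sum_f_R0 (fun k => c * f k + h k) N = c * sum_f_R0 f N + sum_f_R0 h N.
Proof.
  rewrite sum_plus, scal_sum. f_equal. apply sum_eq. intros; ring.
Qed.

Lemma gg_eq (n : nat) :
  fps_mul g g n = 4 * u 4 n - 4 * u 5 n + u 6 n - 4 * u 2 n + 2 * u 3 n + u 0 n.
Proof.
  unfold fps_mul.
  rewrite (sum_eq _ (fun k => (4 * (u 2 k * u 2 (n-k)) + (-2 * (u 2 k * u 3 (n-k)) + (-2 * (u 2 k * u 0 (n-k)) + (-2 * (u 3 k * u 2 (n-k)) + (1 * (u 3 k * u 3 (n-k)) + (1 * (u 3 k * u 0 (n-k)) + (-2 * (u 0 k * u 2 (n-k)) + (1 * (u 0 k * u 3 (n-k)) + (u 0 k * u 0 (n-k)))))))))))).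
  2:{ intros i _. rewrite !g_eq. ring. }
  rewrite !sum_lin, !conv_u. simpl (_ + _)%nat. ring.
Qed.

Lemma ratio_eq (m : nat) :
  fps_mul g g (S m) / g (S m) =
  10 * INR m * (INR m ^ 2 + 16 * INR m + 27) /
  ((3 * INR m + 7) * (3 * INR m + 8) * (3 * INR m + 9)).
Proof.
  rewrite gg_eq, (g_eq (S m)), !u0S. unfold u.
  replace (4*m+3+3)%nat with (S (4*m+2+3)) by lia.
  replace (3*m+3+3)%nat with (S (3*m+2+3)) by lia.
  replace (4*m+4+3)%nat with (S (S (4*m+2+3))) by lia.
  replace (3*m+4+3)%nat with (S (S (3*m+2+3))) by lia.
  replace (4*m+5+3)%nat with (S (S (S (4*m+2+3)))) by lia.
  replace (3*m+5+3)%nat with (S (S (S (3*m+2+3)))) by lia.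
  replace (4*m+6+3)%nat with (S (S (S (S (4*m+2+3))))) by lia.
  replace (3*m+6+3)%nat with (S (S (S (S (3*m+2+3))))) by lia.
  rewrite !factS.
  pose proof (fact_nz (4*m+2+3)). pose proof (fact_nz (3*m+2+3)). pose proof (fact_nz m).
  set (A := INR (fact (4*m+2+3))) in *. set (B := INR (fact (3*m+2+3))) in *.
  set (C := INR (fact m)) in *.
  repeat rewrite S_INR || rewrite plus_INR || rewrite mult_INR. simpl INR.
  pose proof (pos_INR m).
  field. repeat split; lra.
Qed.

Definition hh (t:R) := 10*(1-t)*(1+14*t+12*t^2)/((3+4*t)*(3+5*t)*(3+6*t)).

Lemma hh_cont : continuity_pt hh 0.
Proof. unfold hh. reg. lra. Qed.

Lemma inv_lim : is_lim_seq (fun n => / INR n) 0.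
Proof.
  replace (Finite 0) with (Rbar_inv p_infty) by reflexivity.
  apply is_lim_seq_inv. apply is_lim_seq_INR. discriminate.
Qed.

Theorem mainTheorem1 :
  Un_cv (fun n => fps_mul g g n / g n) (10 / 27).
Proof.
  apply is_lim_seq_Reals.
  replace (10 / 27) with (hh 0) by (unfold hh; field).
  apply (is_lim_seq_ext_loc (fun n => hh (/ INR n))).
  - exists 1%nat. intros n Hn. destruct n as [|m]; [lia|].
    rewrite ratio_eq. unfold hh. rewrite S_INR.
    pose proof (pos_INR m).
    field. repeat split; lra.
  - apply is_lim_seq_continuous. apply hh_cont. apply inv_lim.
Qed.
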